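(* Let $G$ be a Ricci-flat graph that contains no edge $(u,v)$ with $d(u)=d(v)=2$. Then every edge of $G$ is contained in a cycle of length $3$, or a cycle of length $4$, or a cycle of length $5$.
   Context: All graphs are simple (no loops or multiple edges), undirected, connected and locally finite; $d(x)$ is the degree of $x$, $d(x,y)$ the graph distance, and $\Gamma(x)$ the set of neighbours of $x$. For a vertex $x$ and $\alpha\in[0,1]$ let $\mu_x^\alpha$ be the probability measure with $\mu_x^\alpha(x)=\alpha$, $\mu_x^\alpha(z)=\frac{1-\alpha}{d(x)}$ for $z\sim x$, and $0$ otherwise. The transportation distance is $W(\mu_1,\mu_2)=\inf_A\sum_{u,v}A(u,v)d(u,v)$ over all couplings $A$ of $\mu_1,\mu_2$ (i.e. $A:V\times V\to[0,1]$ with finite support, $\sum_v A(u,v)=\mu_1(u)$, $\sum_u A(u,v)=\mu_2(v)$). Set $k_\alpha(x,y)=1-W(\mu_x^\alpha,\mu_y^\alpha)/d(x,y)$ and define the (Lin–Lu–Yau) Ricci curvature $k(x,y)=\lim_{\alpha\to1}k_\alpha(x,y)/(1-\alpha)$. A graph is Ricci-flat if $k(x,y)=0$ for every edge $(x,y)$. An edge is contained in a cycle of length $\ell$ if some cycle subgraph of $G$ with $\ell$ vertices uses that edge. *)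

(* Defs.v *)
From HB Require Import structures.
From mathcomp Require Import all_boot all_order all_algebra.
From mathcomp Require Import all_classical all_reals all_analysis.
Set Implicit Arguments. Unset Strict Implicit. Unset Printing Implicit Defensive.
Import Order.TTheory GRing.Theory Num.Theory numFieldNormedType.Exports.
Local Open Scope ring_scope.
Local Open Scope classical_set_scope.

(* A (possibly infinite) locally finite graph on vertex type V is given by its
   neighbour lists N : V -> seq V, i.e. Gamma(x) = N x (as a set). *)
Section Graph.
Variable V : eqType.
Variable N : V -> seq V.

Definition adj (x y : V) : bool := y \in N x.

Definition simple_graph : Prop :=
  (forall x, uniq (N x)) /\ (forall x, x \notin N x) /\
  (forall x y, (y \in N x) = (x \in N y)).

Definition connected_graph : Prop :=
  forall x y : V, exists p : seq V, path adj x p /\ last x p = y.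

Definition deg (x : V) : nat := size (N x).

(* graph distance: least length of a walk from x to y (0 if none exists) *)
Definition walk_of_len (x y : V) (n : nat) : bool :=
  `[< exists p : seq V, [/\ size p = n, path adj x p & last x p = y] >].

Definition gdist (x y : V) : nat :=
  match pselect (exists n, walk_of_len x y n) with
  | left h => ex_minn h
  | right _ => 0%N
  end.

Variable R : realType.

Definition mu (alpha : R) (x : V) (z : V) : R :=
  if z == x then alpha
  else if z \in N x then (1 - alpha) / (deg x)%:R else 0.

Definition is_coupling (mu1 mu2 : V -> R) (A : V -> V -> R) (s : seq (V * V))
  : Prop :=
  [/\ (forall u v, A u v != 0 -> (u, v) \in s),
      (forall u v, 0 <= A u v <= 1),
      (forall u, \sum_(p <- undup s | p.1 == u) A p.1 p.2 = mu1 u) &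
      (forall v, \sum_(p <- undup s | p.2 == v) A p.1 p.2 = mu2 v)].

Definition cost (A : V -> V -> R) (s : seq (V * V)) : R :=
  \sum_(p <- undup s) A p.1 p.2 * (gdist p.1 p.2)%:R.

Definition Wdist (mu1 mu2 : V -> R) : R :=
  inf [set c | exists A s, is_coupling mu1 mu2 A s /\ c = cost A s].

Definition kappa_alpha (x y : V) (alpha : R) : R :=
  1 - Wdist (mu alpha x) (mu alpha y) / (gdist x y)%:R.

Definition ricci_flat : Prop :=
  forall x y : V, adj x y ->
    (fun alpha : R => kappa_alpha x y alpha / (1 - alpha)) @ (1 : R)^'- --> 0.

Definition edge_in_cycle (x y : V) (l : nat) : Prop :=
  exists c : seq V,
    [/\ size c = l, uniq c, cycle adj c &
        exists i, (i < l)%N /\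
          ((nth x c i = x /\ nth x c (i.+1 %% l) = y) \/
           (nth x c i = y /\ nth x c (i.+1 %% l) = x))].

End Graph.

(* Main.v *)
Require Import Defs.
From HB Require Import structures.
From mathcomp Require Import all_boot all_order all_algebra.
From mathcomp Require Import all_classical all_reals all_analysis.
From mathcomp Require Import ring lra.
Set Implicit Arguments. Unset Strict Implicit. Unset Printing Implicit Defensive.
Import Order.TTheory GRing.Theory Num.Theory numFieldNormedType.Exports.
Local Open Scope ring_scope.
Local Open Scope classical_set_scope.
Lemma no_cvg0 (R : realType) (f : R -> R) (e : R) : 0 < e ->
  (forall a, 1/2 < a -> a < 1 -> e <= `|f a|) -> ~ (f @ (1:R)^'- --> 0).
Proof.
move=> e0 H cv.
have nr := cvgr0_norm_lt f cv _ e0.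
have : \forall a \near (1:R)^'-, False.
  near=> a.
  have h1 : 1/2 < a by near: a; apply: nbhs_left_gt; lra.
  have h2 : a < 1 by near: a; exact: nbhs_left_lt.
  have := H a h1 h2.
  have : `|f a| < e by near: a; exact: nr.
  move=> ha hb; lra.
by move/filter_ex => [].
Unshelve. all: by end_near.
Qed.

Section Gen.
Variable R : realType.

Lemma sum_pred1 (T : eqType) (r : seq T) (F : T -> R) v : uniq r ->
  \sum_(w <- r | w == v) F w = if v \in r then F v else 0.
Proof.
elim: r => [|a r IH] /=; first by rewrite big_nil.
move=> /andP[anr ur]; rewrite big_cons IH // inE.
case: (eqVneq a v) => [<-|av] //=.
by rewrite (negbTE anr) addr0.
Qed.

Lemma sum_pred1' (T : eqType) (r : seq T) (F : T -> R) v : uniq r ->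
  \sum_(w <- r | v == w) F w = if v \in r then F v else 0.
Proof.
move=> ur; rewrite -sum_pred1 //; apply: eq_bigl => w; exact: eq_sym.
Qed.

Lemma sum_if1 (T : eqType) (r : seq T) (c : R) v : uniq r ->
  \sum_(w <- r) (if w == v then c else 0) = if v \in r then c else 0.
Proof. by move=> ur; rewrite -big_mkcond /= sum_pred1. Qed.

Lemma sum_const_seq (T : Type) (r : seq T) (c : R) :
  \sum_(w <- r) c = c * (size r)%:R.
Proof.
elim: r => [|a r IH]; first by rewrite big_nil mulr0.
by rewrite big_cons IH /= -addn1 natrD; ring.
Qed.

Lemma le_sum_term (T : eqType) (r : seq T) (P : pred T) (F : T -> R) p :
  p \in r -> P p -> (forall i, P i -> 0 <= F i) ->
  F p <= \sum_(i <- r | P i) F i.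
Proof.
move=> + Pp F0; elim: r => [|a r IH] //=.
rewrite inE big_cons => /orP[/eqP <-|pr].
  rewrite Pp lerDl; exact: sumr_ge0.
have := IH pr; case: ifP => // Pa h; have := F0 a Pa; lra.
Qed.
Variable V : eqType.
Variable N : V -> seq V.
Hypothesis Hs : simple_graph N.
Hypothesis Hc : connected_graph N.

Lemma adj_sym x y : adj N x y = adj N y x.
Proof. by case: Hs => _ [_ H]; rewrite /adj H. Qed.

Lemma adj_neq x y : adj N x y -> x != y.
Proof.
case: Hs => _ [H _]; rewrite /adj; apply: contraL => /eqP ->; exact: H.
Qed.

Lemma gdist_ub u v p : path (adj N) u p -> last u p = v -> (gdist N u v <= size p)%N.
Proof.
move=> pp lp; rewrite /gdist; case: pselect => [h|nh].
  case: ex_minnP => m _ Hmin; apply: Hmin; apply/asboolP; by exists p.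
by exfalso; apply: nh; exists (size p); apply/asboolP; exists p.
Qed.

Lemma gdist_lb u v k : (forall p, path (adj N) u p -> last u p = v -> (k <= size p)%N) ->
  (k <= gdist N u v)%N.
Proof.
move=> H; rewrite /gdist; case: pselect => [h|nh].
  case: ex_minnP => m /asboolP [p [<- pp lp]] _; exact: H.
by exfalso; have [p [pp lp]] := Hc u v; apply: nh; exists (size p); apply/asboolP; exists p.
Qed.

Lemma gdist_refl u : gdist N u u = 0%N.
Proof. by have := @gdist_ub u u [::] erefl erefl; rewrite leqn0 => /eqP. Qed.

Lemma gdist_adj u v : adj N u v -> gdist N u v = 1%N.
Proof.
move=> a; apply/eqP; rewrite eqn_leq; apply/andP; split.
  by apply: (@gdist_ub u v [:: v]) => //=; rewrite a.
apply: gdist_lb => -[|w p] //= _ uv; move: (adj_neq a); by rewrite uv eqxx.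
Qed.

Lemma gdist_ge1 u v : u != v -> (1 <= gdist N u v)%N.
Proof. move=> uv; apply: gdist_lb => -[|w p] //= _ e; by rewrite e eqxx in uv. Qed.

Lemma gdist_ge2 u v : u != v -> ~~ adj N u v -> (2 <= gdist N u v)%N.
Proof.
move=> uv nuv; apply: gdist_lb => -[|w [|z p]] //=.
- by move=> _ e; rewrite e eqxx in uv.
- by rewrite andbT => a e; rewrite -e a in nuv.
Qed.

Lemma gdist_ge3 u v : u != v -> ~~ adj N u v ->
  (forall w, adj N u w -> adj N w v -> False) -> (3 <= gdist N u v)%N.
Proof.
move=> uv nuv nw; apply: gdist_lb => -[|w [|z [|t p]]] //=.
- by move=> _ e; rewrite e eqxx in uv.
- by rewrite andbT => a e; rewrite -e a in nuv.
- by rewrite andbT => /andP[a b] e; rewrite -e in nw; case: (nw w).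
Qed.

Lemma cost_ge (mu1 mu2 : V -> R) A s (X Y : seq V) (g h : V -> R) :
  is_coupling mu1 mu2 A s -> uniq X -> uniq Y ->
  (forall u, u \notin X -> mu1 u = 0) -> (forall v, v \notin Y -> mu2 v = 0) ->
  (forall u v, u \in X -> v \in Y -> g u - h v <= (gdist N u v)%:R) ->
  \sum_(u <- X) g u * mu1 u - \sum_(v <- Y) h v * mu2 v <= cost N A s.
Proof.
case=> HsA H01 H1 H2 uX uY s1 s2 Lip.
set S := undup s; have uS : uniq S := undup_uniq s.
have A0 : forall p, 0 <= A p.1 p.2 by move=> p; case/andP: (H01 p.1 p.2).
have supp : forall p, p \in S -> A p.1 p.2 != 0 -> p.1 \in X /\ p.2 \in Y.
  move=> p pS nz; split.
    apply/negPn/negP => nX; have := s1 _ nX; rewrite -H1 => e.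
    have := @le_sum_term _ S (fun q => q.1 == p.1) (fun q => A q.1 q.2) p pS (eqxx _) (fun q _ => A0 q).
    rewrite e => le; move/eqP: nz; apply; apply/eqP; rewrite eq_le le A0 //.
  apply/negPn/negP => nY; have := s2 _ nY; rewrite -H2 => e.
  have := @le_sum_term _ S (fun q => q.2 == p.2) (fun q => A q.1 q.2) p pS (eqxx _) (fun q _ => A0 q).
  rewrite e => le; move/eqP: nz; apply; apply/eqP; rewrite eq_le le A0 //.
have key1 : \sum_(p <- S) A p.1 p.2 * g p.1 = \sum_(u <- X) g u * mu1 u.
  transitivity (\sum_(p <- S) \sum_(u <- X) (if p.1 == u then A p.1 p.2 * g u else 0)).
    apply: eq_big_seq => p pS; rewrite -big_mkcond /= sum_pred1' //.
    case: (eqVneq (A p.1 p.2) 0) => [->|nz]; first by rewrite mul0r; case: ifP.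
    by have [-> _] := supp p pS nz.
  rewrite exchange_big /=; apply: eq_bigr => u _.
  rewrite -big_mkcond /= -H1 mulrC mulr_suml; apply: eq_bigr => p /eqP -> //.
have key2 : \sum_(p <- S) A p.1 p.2 * h p.2 = \sum_(v <- Y) h v * mu2 v.
  transitivity (\sum_(p <- S) \sum_(v <- Y) (if p.2 == v then A p.1 p.2 * h v else 0)).
    apply: eq_big_seq => p pS; rewrite -big_mkcond /= sum_pred1' //.
    case: (eqVneq (A p.1 p.2) 0) => [->|nz]; first by rewrite mul0r; case: ifP.
    by have [_ ->] := supp p pS nz.
  rewrite exchange_big /=; apply: eq_bigr => v _.
  rewrite -big_mkcond /= -H2 mulrC mulr_suml; apply: eq_bigr => p /eqP -> //.
rewrite -key1 -key2 -sumrB /cost -/S big_seq [X in _ <= X]big_seq; apply: ler_sum => p pS.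
case: (eqVneq (A p.1 p.2) 0) => [->|nz]; first by rewrite !mul0r subrr.
have [pX pY] := supp p pS nz.
rewrite -mulrBr; apply: ler_wpM2l => //; exact: Lip.
Qed.


Lemma sum_constpred (T : Type) (r : seq T) (b : bool) (F : T -> R) :
  \sum_(i <- r | b) F i = if b then \sum_(i <- r) F i else 0.
Proof. by case: b => //; rewrite big_pred0. Qed.

Lemma cost_ge0 (A : V -> V -> R) (s : seq (V * V)) (mu1 mu2 : V -> R) : is_coupling mu1 mu2 A s -> 0 <= cost N A s.
Proof.
case=> _ H01 _ _; apply: sumr_ge0 => p _; apply: mulr_ge0 => //.
by case/andP: (H01 p.1 p.2).
Qed.

Lemma W_ub (mu1 mu2 : V -> R) (A : V -> V -> R) (s : seq (V * V)) : is_coupling mu1 mu2 A s -> Wdist N mu1 mu2 <= cost N A s.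
Proof.
move=> cp; rewrite /Wdist; apply: ge_inf; last by exists A, s.
exists 0 => c [A' [s' [cp' ->]]]; exact: cost_ge0 cp'.
Qed.

Lemma W_lb (mu1 mu2 : V -> R) (L : R) :
  (forall A s, is_coupling mu1 mu2 A s -> L <= cost N A s) ->
  Wdist N mu1 mu2 = 0 \/ L <= Wdist N mu1 mu2.
Proof.
move=> H; rewrite /Wdist.
set E := [set c | _].
case: (pselect (exists c, E c)) => [ne|em].
  right; apply: lb_le_inf => // c [A [s [cp ->]]]; exact: H.
left; suff -> : E = set0 by rewrite inf0.
by apply/seteqP; split => // c Ec; apply: em; exists c.
Qed.


Lemma leaf_ratio x y (al : R) : adj N x y -> deg N x = 1%N -> 1/2 <= al -> al < 1 ->
  2 / (deg N y)%:R <= kappa_alpha N x y al / (1 - al).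
Proof.
move=> axy dx ha1 ha2.
have xy := adj_neq axy.
have yx : y != x by rewrite eq_sym.
have ayx : adj N y x by rewrite adj_sym.
have Nx : N x = [:: y].
  move: dx axy; rewrite /deg /adj; case: (N x) => [|z [|]] //= _.
  by rewrite inE => /eqP ->.
have nyy : y \notin N y by case: Hs => _ [H _]; exact: H.
have nxx : x \notin N x by case: Hs => _ [H _]; exact: H.
have uNy : uniq (N y) by case: Hs => H _; exact: H.
set b := deg N y.
have b1 : (1 <= b)%N by move: ayx; rewrite /adj /b /deg; case: (N y).
have b1R : 1 <= b%:R :> R by rewrite ler1n.
have bR : 0 < b%:R :> R by lra.
set c := (1 - al) / b%:R.
have cb : c * b%:R = 1 - al by rewrite /c divfK // (gt_eqF bR).
have c0 : 0 <= c by rewrite /c divr_ge0 //; lra.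
have cle : c <= 1 - al by rewrite /c ler_pdivrMr //; nra.
pose A := fun u v : V => if u == x then (if v == x then c else if v == y then al - c else 0)
  else if u == y then (if v == x then 0 else if (v == y) || (v \in N y) then c else 0) else 0.
pose s := [:: (x,x); (x,y); (y,y)] ++ map (pair y) (N y).
have us : uniq s.
  rewrite cat_uniq /= !inE !xpair_eqE !eqxx (negbTE xy) /=.
  rewrite map_inj_uniq ?uNy ?andbT; last by move=> p q [].
  apply/hasPn => p /mapP [w wN ->]; rewrite !inE !xpair_eqE (negbTE yx) eqxx /=.
  by apply/eqP => wy; move: wN; rewrite wy (negbTE nyy).
have ayN : x \in N y := ayx.
have sumAy : \sum_(i <- N y) A y i = c * b%:R - c.
  transitivity (\sum_(i <- N y) (c - (if i == x then c else 0))).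
    apply: eq_big_seq => i iN; rewrite /A (negbTE yx) eqxx iN orbT.
    by case: ifP => _; rewrite ?subrr ?subr0.
  by rewrite sumrB sum_const_seq sum_if1 // ayN.
have cp : is_coupling (mu N al x) (mu N al y) A s.
  rewrite /is_coupling (undup_id us); split.
  - move=> u v; rewrite /A.
    case: (eqVneq u x) => [->|ux].
      case: (eqVneq v x) => [->|vx] H; first by rewrite mem_cat !inE eqxx.
      case: (eqVneq v y) => [vy|vy] in H *; first by rewrite vy mem_cat !inE eqxx ?orbT.
      by rewrite eqxx in H.
    case: (eqVneq u y) => [->|uy]; last by rewrite eqxx.
    case: (eqVneq v x) => [->|vx]; first by rewrite eqxx.
    case: (eqVneq v y) => [->|vy] /=; first by rewrite mem_cat !inE eqxx ?orbT.
    case: ifP => vN; last by rewrite eqxx.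
    move=> _; rewrite mem_cat; apply/orP; right; apply/mapP; by exists v.
  - by move=> u v; rewrite /A; do ! case: ifP => _; apply/andP; split; lra.
  - move=> u; rewrite big_cat /= !big_cons big_nil big_map /= sum_constpred.
    rewrite /mu /deg Nx /= divr1 inE.
    case: (eqVneq u x) => [->|ux]; first by rewrite (negbTE yx) /A !eqxx (negbTE yx); lra.
    have [_|uy] := eqVneq u y; last by rewrite addr0.
    rewrite sumAy /A (negbTE yx) eqxx /=; lra.
  - move=> v; rewrite big_cat /= !big_cons big_nil big_map /= sum_pred1 //.
    rewrite /mu -/b -/c.
    case: (eqVneq v x) => [vx|vx].
      subst v; rewrite ?(negbTE yx) ?(negbTE xy) ?ayN /A !eqxx ?(negbTE yx) /=; lra.
    case: (eqVneq v y) => [vy|vy].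
      subst v.
      rewrite ?(negbTE xy) ?(negbTE nyy) /A !eqxx ?(negbTE yx) /=; lra.
    rewrite add0r; case: ifP => // vN.
    by rewrite /A eqxx (negbTE yx) (negbTE vx) vN orbT.
have costE : cost N A s = al + (1 - al) - 2 * c.
  rewrite /cost (undup_id us) big_cat /= !big_cons big_nil big_map /=.
  rewrite !gdist_refl gdist_adj //.
  have -> : \sum_(i <- N y) A y i * (gdist N y i)%:R = \sum_(i <- N y) A y i.
    by apply: eq_big_seq => i iN; rewrite gdist_adj // mulr1.
  rewrite sumAy cb /A !eqxx (negbTE yx) /=; lra.
have W1 := W_ub cp.
rewrite /kappa_alpha gdist_adj // divr1 ler_pdivlMr; last by lra.
have -> : 2 / b%:R * (1 - al) = 2 * c by rewrite /c; ring.
lra.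
Qed.


Lemma neg_ratio x y (al : R) : adj N x y -> (2 <= deg N x)%N -> (2 <= deg N y)%N ->
  ~ (deg N x = 2%N /\ deg N y = 2%N) ->
  (forall w, adj N x w -> adj N y w -> False) ->
  (forall u v, adj N x u -> adj N y v -> u != y -> v != x -> ~~ adj N u v) ->
  (forall u v w, adj N x u -> adj N y v -> u != y -> v != x -> adj N u w -> adj N w v -> False) ->
  1/2 < al -> al < 1 ->
  1/3 <= `| kappa_alpha N x y al / (1 - al) |.
Proof.
move=> axy a2 b2 nab HT HQ HP ha1 ha2.
have xy := adj_neq axy.
have yx : y != x by rewrite eq_sym.
have ayx : adj N y x by rewrite adj_sym.
have nyy : y \notin N y by case: Hs => _ [H _]; exact: H.
have nxx : x \notin N x by case: Hs => _ [H _]; exact: H.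
have uNy : uniq (N y) by case: Hs => H _; exact: H.
have uNx : uniq (N x) by case: Hs => H _; exact: H.
have axN : y \in N x := axy.
have ayN : x \in N y := ayx.
set a := deg N x; set b := deg N y.
have aR : 2 <= a%:R :> R by rewrite (ler_nat R 2).
have bR : 2 <= b%:R :> R by rewrite (ler_nat R 2).
have abR : 3 <= a%:R :> R \/ 3 <= b%:R :> R.
  case: (leqP 3 a) => h; first by left; rewrite (ler_nat R 3).
  case: (leqP 3 b) => h'; first by right; rewrite (ler_nat R 3).
  by exfalso; apply: nab; split; apply/eqP; rewrite eqn_leq; apply/andP; split => //; rewrite -ltnS.
pose g := fun u : V => if u == x then 1 else if u == y then 0 else 2 : R.
pose h := fun v : V => if v == y then 0 else if v == x then 1 else -1 : R.
set p := (1 - al) / a%:R.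
set q := (1 - al) / b%:R.
have pa : p * a%:R = 1 - al by rewrite /p divfK // gt_eqF //; lra.
have qb : q * b%:R = 1 - al by rewrite /q divfK // gt_eqF //; lra.
have p0 : 0 <= p by rewrite /p divr_ge0 //; lra.
have q0 : 0 <= q by rewrite /q divr_ge0 //; lra.
have Sx : \sum_(u <- x :: N x) g u * mu N al x u = al + p * (2 * a%:R - 2).
  rewrite big_cons /mu /g !eqxx mul1r -/a -/p.
  transitivity (al + \sum_(u <- N x) p * (2 - (if u == y then 2 else 0))).
    congr (_ + _); apply: eq_big_seq => u uN.
    have ux : (u == x) = false by apply/eqP => e; move: uN; rewrite e (negbTE nxx).
    by rewrite ux uN; case: ifP => _; rewrite ?subrr ?subr0 mulrC.
  by rewrite -mulr_sumr sumrB sum_const_seq sum_if1 // axN.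
have Sy : \sum_(v <- y :: N y) h v * mu N al y v = q * (2 - b%:R).
  rewrite big_cons /mu /h !eqxx mul0r add0r -/b -/q.
  transitivity (\sum_(v <- N y) q * ((if v == x then 2 else 0) - 1)).
    apply: eq_big_seq => v vN.
    have vy : (v == y) = false by apply/eqP => e; move: vN; rewrite e (negbTE nyy).
    rewrite vy vN mulrC; case: ifP => _; congr (_ * _); lra.
  rewrite -mulr_sumr sumrB sum_const_seq sum_if1 // ayN; congr (_ * _); lra.
have Lip : forall u v, u \in x :: N x -> v \in y :: N y -> g u - h v <= (gdist N u v)%:R.
  move=> u v; rewrite !inE => /orP[/eqP->|uN] /orP[/eqP->|vN].
  - rewrite /g /h !eqxx gdist_adj //; lra.
  - have vy : (v == y) = false by apply/eqP => e; move: vN; rewrite e (negbTE nyy).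
    rewrite /g /h eqxx vy; case: (eqVneq v x) => [_|vx]; first by rewrite subrr ler0n.
    have nxv : ~~ adj N x v by apply/negP => axv; exact: (HT v axv vN).
    have xv : x != v by rewrite eq_sym.
    have := gdist_ge2 xv nxv; rewrite -(ler_nat R) => H; lra.
  - have ux : (u == x) = false by apply/eqP => e; move: uN; rewrite e (negbTE nxx).
    rewrite /g /h eqxx ux; case: (eqVneq u y) => [_|uy]; first by rewrite subrr ler0n.
    have nuy : ~~ adj N u y by apply/negP => auy; apply: (HT u uN); rewrite adj_sym.
    have := gdist_ge2 uy nuy; rewrite -(ler_nat R) => H; lra.
  - have ux : (u == x) = false by apply/eqP => e; move: uN; rewrite e (negbTE nxx).
    have vy : (v == y) = false by apply/eqP => e; move: vN; rewrite e (negbTE nyy).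
    have G0 : 0 <= (gdist N u v)%:R :> R by rewrite ler0n.
    rewrite /g /h ux vy; case: (eqVneq u y) => [e|uy].
      rewrite e; case: (eqVneq v x) => [_|vx]; first by apply: (le_trans _ (ler0n _ _)); lra.
      rewrite gdist_adj //; lra.
    case: (eqVneq v x) => [e|vx].
      have ux' : u != x by rewrite ux.
      rewrite e; have := gdist_ge1 ux'; rewrite -(ler_nat R) => H; lra.
    have uv : u != v by apply/eqP => e; apply: (HT u uN); rewrite e.
    have := gdist_ge3 uv (HQ u v uN vN uy vx) (fun w h1 h2 => HP u v w uN vN uy vx h1 h2).
    rewrite -(ler_nat R) => H; lra.
have Lb : forall A s, is_coupling (mu N al x) (mu N al y) A s ->
    (al + p * (2 * a%:R - 2)) - q * (2 - b%:R) <= cost N A s.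
  move=> A s cp; rewrite -Sx -Sy; apply: (cost_ge cp) => //=.
  - by rewrite nxx uNx.
  - by rewrite nyy uNy.
  - by move=> u; rewrite inE negb_or => /andP[ux uN]; rewrite /mu (negbTE ux) (negbTE uN).
  - by move=> v; rewrite inE negb_or => /andP[vy vN]; rewrite /mu (negbTE vy) (negbTE vN).
case: (W_lb Lb) => [W0|WL]; rewrite /kappa_alpha gdist_adj // divr1.
  rewrite W0 subr0 ler_normr; apply/orP; left; rewrite ler_pdivlMr ?subr_gt0 //; lra.
rewrite ler_normr; apply/orP; right; rewrite -mulNr ler_pdivlMr ?subr_gt0 //.
have e1 : p * (2 * a%:R - 2) = 2 * (1 - al) - 2 * p by rewrite -pa; ring.
have e2 : q * (2 - b%:R) = 2 * q - (1 - al) by rewrite -qb; ring.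
have p2 : p * 2 <= 1 - al by rewrite -pa; apply: ler_wpM2l.
have q2 : q * 2 <= 1 - al by rewrite -qb; apply: ler_wpM2l.
rewrite e1 e2 in WL.
case: abR => [a3|b3].
  have p3 : p * 3 <= 1 - al by rewrite -pa; apply: ler_wpM2l.
  lra.
have q3 : q * 3 <= 1 - al by rewrite -qb; apply: ler_wpM2l.
lra.
Qed.

End Gen.

Local Close Scope classical_set_scope.
Local Close Scope ring_scope.
Unset Implicit Arguments.

Theorem lemma5 (R : realType) (V : eqType) (N : V -> seq V) :
  simple_graph N -> connected_graph N ->
  ricci_flat N R ->
  (forall u v : V, adj N u v -> ~ (deg N u = 2%N /\ deg N v = 2%N)) ->
  forall x y : V, adj N x y ->
    edge_in_cycle N x y 3 \/ edge_in_cycle N x y 4 \/ edge_in_cycle N x y 5.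
Proof.
Local Open Scope ring_scope.
move=> Hs Hc Hrf H22 x y axy.
have ayx : adj N y x by rewrite (adj_sym Hs).
have degpos : forall u v, adj N u v -> (1 <= deg N u)%N.
  by move=> u v; rewrite /adj /deg; case: (N u).
have e12 : (1/2 : R) < 1 by lra.
case: (eqVneq (deg N x) 1%N) => [dx1|dx1].
  exfalso; apply: (@no_cvg0 R _ (2 / (deg N y)%:R)) _ _ (Hrf x y axy).
    by rewrite divr_gt0 // ltr0n; apply: degpos ayx.
  move=> al h1 h2; apply: le_trans (ler_norm _).
  apply: (leaf_ratio Hs Hc) => //; lra.
case: (eqVneq (deg N y) 1%N) => [dy1|dy1].
  exfalso; apply: (@no_cvg0 R _ (2 / (deg N x)%:R)) _ _ (Hrf y x ayx).
    by rewrite divr_gt0 // ltr0n; apply: degpos axy.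
  move=> al h1 h2; apply: le_trans (ler_norm _).
  apply: (leaf_ratio Hs Hc) => //; lra.
have a2 : (2 <= deg N x)%N by have := degpos _ _ axy; rewrite leq_eqVlt eq_sym (negbTE dx1).
have b2 : (2 <= deg N y)%N by have := degpos _ _ ayx; rewrite leq_eqVlt eq_sym (negbTE dy1).
case: (pselect (edge_in_cycle N x y 3)) => [h|n3]; first by left.
case: (pselect (edge_in_cycle N x y 4)) => [h|n4]; first by right; left.
case: (pselect (edge_in_cycle N x y 5)) => [h|n5]; first by right; right.
exfalso.
have HT : forall w, adj N x w -> adj N y w -> False.
  move=> w axw ayw; apply: n3; exists [:: x; y; w]; split => //.
  - by rewrite /= !inE (negbTE (adj_neq Hs axy)) (negbTE (adj_neq Hs axw)) (negbTE (adj_neq Hs ayw)).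
  - by rewrite /= axy ayw (adj_sym Hs w x) axw.
  - by exists 0%N; split => //; left.
have xy : (x == y) = false by rewrite (negbTE (adj_neq Hs axy)).
have HQ : forall u v, adj N x u -> adj N y v -> u != y -> v != x -> ~~ adj N u v.
  move=> u v axu ayv uy vx; apply/negP => auv; apply: n4.
  have xu : (x == u) = false by rewrite (negbTE (adj_neq Hs axu)).
  have yv : (y == v) = false by rewrite (negbTE (adj_neq Hs ayv)).
  have xv : (x == v) = false by rewrite eq_sym (negbTE vx).
  have yu : (y == u) = false by rewrite eq_sym (negbTE uy).
  have vu : (v == u) = false by apply/eqP => e; apply: (HT u axu); rewrite -e.
  exists [:: x; y; v; u]; split => //.
  - by rewrite /= !inE xy xu yv xv yu vu.
  - by rewrite /= axy ayv (adj_sym Hs v u) auv (adj_sym Hs u x) axu.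
  - by exists 0%N; split => //; left.
have HP : forall u v w, adj N x u -> adj N y v -> u != y -> v != x ->
    adj N u w -> adj N w v -> False.
  move=> u v w axu ayv uy vx auw awv; apply: n5.
  have xu : (x == u) = false by rewrite (negbTE (adj_neq Hs axu)).
  have yv : (y == v) = false by rewrite (negbTE (adj_neq Hs ayv)).
  have xv : (x == v) = false by rewrite eq_sym (negbTE vx).
  have yu : (y == u) = false by rewrite eq_sym (negbTE uy).
  have vu : (v == u) = false by apply/eqP => e; apply: (HT u axu); rewrite -e.
  have xw : (x == w) = false by apply/eqP => e; apply: (HT v) => //; rewrite e.
  have yw : (y == w) = false.
    by apply/eqP => e; apply: (HT u) => //; rewrite (adj_sym Hs) e.
  have vw : (v == w) = false by rewrite eq_sym (negbTE (adj_neq Hs awv)).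
  have wu : (w == u) = false by rewrite eq_sym (negbTE (adj_neq Hs auw)).
  exists [:: x; y; v; w; u]; split => //.
  - by rewrite /= !inE xy xu yv xv yu vu xw yw vw wu.
  - by rewrite /= axy ayv (adj_sym Hs v w) awv (adj_sym Hs w u) auw (adj_sym Hs u x) axu.
  - by exists 0%N; split => //; left.
apply: (@no_cvg0 R _ (1/3)) _ _ (Hrf x y axy); first lra.
move=> al h1 h2; exact: (neg_ratio Hs Hc axy a2 b2 (H22 x y axy) HT HQ HP h1 h2).
Qed.
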